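(* Let $0<a,b<1$ and integers $1\le f<N$, and consider the two-strata persistent gambler's ruin process of the context. For integers $0\le m<n<N$ let $\rho_{m,n}$ and $\rho_{n,m}$ be the one-sided first passage probabilities defined in the context. Then: (I.1) for $\ell\ge1$, $j\ge0$ with $f-\ell\ge0$ and $f+j<N$: $\rho_{f-\ell,f+j}=\dfrac{b/(2a)}{\,j+\ell\frac ba-(\ell+j-1)b\,}$; (I.2) for the same $\ell,j$: $\rho_{f+j,f-\ell}=\dfrac{1/2}{\,(j+1)+(\ell-1)\frac ba-(\ell+j-1)b\,}$; (II.1) for $0\le m<m+\ell\le f-1$: $\rho_{m,m+\ell}=\rho_{m+\ell,m}=\dfrac{1}{2(\ell-(\ell-1)a)}$; (II.2) for $f\le m<m+j<N$: $\rho_{m,m+j}=\rho_{m+j,m}=\dfrac{1}{2(j-(j-1)b)}$.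
   Context: The process $(\mathbf X_j)_{j\ge0}$ on $\mathbb Z\cap[-N,N]$ has increments $\varepsilon_j=\mathbf X_j-\mathbf X_{j-1}\in\{\pm1\}$ with $P(\varepsilon_1=1)=P(\varepsilon_1=-1)=\frac12$ and for $j\ge1$, $P(\varepsilon_{j+1}=1\mid\varepsilon_j=1,|\mathbf X_j|=k)=P(\varepsilon_{j+1}=-1\mid\varepsilon_j=-1,|\mathbf X_j|=k)=a_k$ (reversal with probability $1-a_k$), with $a_k=a$ for $0\le k\le f-1$ and $a_k=b$ for $f\le k<N$; it stops when $|\mathbf X_j|=N$. For $m\neq n$ in $(-N,N)$ and the process started at $\mathbf X_0=m$, let $\mathbf L_{m,n}:=\inf\{j\ge1:\mathbf X_j=n\text{ or }|\mathbf X_j|=N\}$. For $m<n$ define $\rho_{m,n}:=P(\mathbf X_j\ge m,\ j=0,\dots,\mathbf L_{m,n}\mid\mathbf X_0=m)$ and $\rho_{n,m}:=P(\mathbf X_j\le n,\ j=0,\dots,\mathbf L_{n,m}\mid\mathbf X_0=n)$. *)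

(* Defs.v *)
From Stdlib Require Import Reals ZArith List Bool.
From Coquelicot Require Import Coquelicot.
Import ListNotations.
Open Scope R_scope.

Definition inc (e : bool) : Z := if e then 1%Z else (-1)%Z.

Definition akp (a b : R) (f : Z) (k : Z) : R :=
  if (Z.abs k <? f)%Z then a else b.

Definition step_prob (a b : R) (f : Z) (prev : bool) (pos : Z) (e : bool) : R :=
  if Bool.eqb prev e then akp a b f pos else 1 - akp a b f pos.

Fixpoint weight_from (a b : R) (f : Z) (prev : bool) (pos : Z) (es : list bool) : R :=
  match es with
  | [] => 1
  | e :: es' => step_prob a b f prev pos e * weight_from a b f e (pos + inc e)%Z es'
  end.

Definition weight (a b : R) (f : Z) (x0 : Z) (es : list bool) : R :=
  match es with
  | [] => 1
  | e :: es' => / 2 * weight_from a b f e (x0 + inc e)%Z es'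
  end.

Fixpoint positions (x : Z) (es : list bool) : list Z :=
  match es with
  | [] => []
  | e :: es' => (x + inc e)%Z :: positions (x + inc e)%Z es'
  end.

Fixpoint all_paths (k : nat) : list (list bool) :=
  match k with
  | O => [[]]
  | S k' => map (cons true) (all_paths k') ++ map (cons false) (all_paths k')
  end.

Definition hits (N target y : Z) : bool := (y =? target)%Z || (Z.abs y =? N)%Z.

Definition stops_at_end (N target : Z) (ps : list Z) : bool :=
  match ps with
  | [] => false
  | _ => forallb (fun y => negb (hits N target y)) (removelast ps)
         && hits N target (last ps 0%Z)
  end.

(** P( L_{x0,target} = k and X_j in [side] for j = 0..L | X_0 = x0 ). *)
Definition event_prob (a b : R) (f N : Z) (side : Z -> bool) (x0 target : Z) (k : nat) : R :=
  fold_right Rplus 0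
    (map (fun es =>
            let ps := positions x0 es in
            if stops_at_end N target ps && side x0 && forallb side ps
            then weight a b f x0 es else 0)
         (all_paths k)).

(** One-sided first passage probabilities rho_{x,y}:
    for x < y the process must stay >= x, for x > y it must stay <= x.
    The probability of the event is the sum over the (finite) values of L. *)
Definition rho (a b : R) (f N : Z) (x y : Z) : R :=
  if (x <? y)%Z
  then Series (event_prob a b f N (fun z => (x <=? z)%Z) x y)
  else Series (event_prob a b f N (fun z => (z <=? x)%Z) x y).

(* Main.v *)
Require Import Defs.
From Stdlib Require Import Reals ZArith List Bool Lia Lra.
From Coquelicot Require Import Coquelicot.
Import ListNotations.
Open Scope R_scope.

Definition sumR (l : list R) := fold_right Rplus 0 l.

Lemma sumR_app l1 l2 : sumR (l1 ++ l2) = sumR l1 + sumR l2.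
Proof. induction l1; simpl; [ring|]. unfold sumR in *; simpl. rewrite IHl1; ring. Qed.

Lemma sumR_plus {A} (g h : A -> R) l :
  sumR (map (fun x => g x + h x) l) = sumR (map g l) + sumR (map h l).
Proof. induction l; unfold sumR in *; simpl; [ring|]. rewrite IHl; ring. Qed.

Lemma sumR_scal {A} c (g : A -> R) l :
  sumR (map (fun x => c * g x) l) = c * sumR (map g l).
Proof. induction l; unfold sumR in *; simpl; [ring|]. rewrite IHl; ring. Qed.

Lemma sumR_zero {A} (l : list A) : sumR (map (fun _ => 0) l) = 0.
Proof. induction l; unfold sumR in *; simpl; [ring|]. rewrite IHl; ring. Qed.

Lemma sumR_nonneg {A} (g : A -> R) l : (forall x, 0 <= g x) -> 0 <= sumR (map g l).
Proof. intro H; induction l; unfold sumR in *; simpl; [lra|]. specialize (H a). lra. Qed.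

Lemma sum_all_S (F : list bool -> R) k :
  sumR (map F (all_paths (S k))) =
  sumR (map (fun es => F (true :: es)) (all_paths k)) +
  sumR (map (fun es => F (false :: es)) (all_paths k)).
Proof. simpl. rewrite map_app, sumR_app, !map_map. reflexivity. Qed.

Lemma sum_nil_ind c k :
  sumR (map (fun es : list bool => match es with [] => c | _ => 0 end) (all_paths k))
  = match k with O => c | S _ => 0 end.
Proof.
  destruct k. { unfold sumR; simpl; ring. }
  rewrite sum_all_S. simpl. rewrite !sumR_zero. ring.
Qed.

Lemma stops_cons N t y ps : stops_at_end N t (y :: ps) =
  match ps with [] => hits N t y | _ => negb (hits N t y) && stops_at_end N t ps end.
Proof.
  destruct ps as [|z ps]; [reflexivity|].
  unfold stops_at_end. cbn [removelast forallb]. rewrite andb_assoc. reflexivity.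
Qed.

Definition term a b f N (side : Z -> bool) target prev pos es :=
  if stops_at_end N target (positions pos es) && forallb side (positions pos es)
  then weight_from a b f prev pos es else 0.

Definition Pk a b f N side target k prev pos :=
  sumR (map (term a b f N side target prev pos) (all_paths k)).

Definition ind (c : R) (k : nat) := match k with O => c | S _ => 0 end.
Definition bR (x : bool) : R := if x then 1 else 0.

Definition Gk a b f N side target k e y :=
  ind (bR (hits N target y && side y)) k +
  bR (side y && negb (hits N target y)) * Pk a b f N side target k e y.

Lemma core a b f N side target e y es :
  (if stops_at_end N target (y :: positions y es) && (side y && forallb side (positions y es))
   then weight_from a b f e y es else 0)
  = match es with [] => bR (hits N target y && side y) | _ => 0 end
    + bR (side y && negb (hits N target y)) * term a b f N side target e y es.
Proof.
  rewrite stops_cons. unfold term.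
  destruct es as [|e' es'].
  - simpl. destruct (hits N target y), (side y); simpl; ring.
  - cbn [positions].
    destruct (stops_at_end N target ((y + inc e')%Z :: positions (y + inc e')%Z es')),
      (forallb side ((y + inc e')%Z :: positions (y + inc e')%Z es')),
      (hits N target y), (side y); cbn [andb negb bR]; ring.
Qed.

Lemma Pk_0 a b f N side target prev pos : Pk a b f N side target 0 prev pos = 0.
Proof. unfold Pk, term, sumR; simpl. ring. Qed.

Lemma Pk_S a b f N side target k prev pos :
  Pk a b f N side target (S k) prev pos =
  step_prob a b f prev pos true * Gk a b f N side target k true (pos + inc true)%Z +
  step_prob a b f prev pos false * Gk a b f N side target k false (pos + inc false)%Z.
Proof.
  unfold Pk at 1. rewrite sum_all_S.
  assert (E : forall e, map (fun es => term a b f N side target prev pos (e :: es)) (all_paths k)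
    = map (fun es => step_prob a b f prev pos e *
        ((fun es => match es with [] => bR (hits N target (pos + inc e)%Z && side (pos + inc e)%Z) | _ => 0 end) es
         + (fun es => bR (side (pos + inc e)%Z && negb (hits N target (pos + inc e)%Z)) *
             term a b f N side target e (pos + inc e)%Z es) es)) (all_paths k)).
  { intro e. apply map_ext. intro es. rewrite <- core. unfold term. simpl positions.
    simpl weight_from. cbn [forallb].
    destruct (_ && _); ring. }
  rewrite !E, !sumR_scal, !sumR_plus, !sum_nil_ind, !sumR_scal. unfold Gk, Pk. reflexivity.
Qed.

Lemma event_0 a b f N side x0 t : event_prob a b f N side x0 t 0 = 0.
Proof. unfold event_prob; simpl. ring. Qed.

Lemma event_S a b f N side x0 t k : event_prob a b f N side x0 t (S k) =
  bR (side x0) * (/2 * Gk a b f N side t k true (x0 + inc true)%Z +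
                  /2 * Gk a b f N side t k false (x0 + inc false)%Z).
Proof.
  unfold event_prob. fold (sumR (map (fun es => let ps := positions x0 es in
    if stops_at_end N t ps && side x0 && forallb side ps then weight a b f x0 es else 0) (all_paths (S k)))).
  rewrite sum_all_S.
  assert (E : forall e, map (fun es => let ps := positions x0 (e :: es) in
    if stops_at_end N t ps && side x0 && forallb side ps then weight a b f x0 (e :: es) else 0) (all_paths k)
    = map (fun es => (bR (side x0) * /2) *
        ((fun es => match es with [] => bR (hits N t (x0 + inc e)%Z && side (x0 + inc e)%Z) | _ => 0 end) es
         + (fun es => bR (side (x0 + inc e)%Z && negb (hits N t (x0 + inc e)%Z)) *
             term a b f N side t e (x0 + inc e)%Z es) es)) (all_paths k)).
  { intro e. apply map_ext. intro es. rewrite <- core. cbn [positions forallb weight].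
    destruct (side x0); cbn [bR]; [rewrite andb_true_r | rewrite andb_false_r];
    destruct (stops_at_end N t ((x0 + inc e)%Z :: positions (x0 + inc e)%Z es)),
      (side (x0 + inc e)%Z && forallb side (positions (x0 + inc e)%Z es)); cbn [andb]; ring. }
  rewrite !E, !sumR_scal, !sumR_plus, !sum_nil_ind, !sumR_scal. unfold Gk, Pk, ind. ring.
Qed.

Lemma akp_range a b f x : 0 <= a <= 1 -> 0 <= b <= 1 -> 0 <= akp a b f x <= 1.
Proof. intros; unfold akp; destruct (_ <? _)%Z; lra. Qed.

Lemma step_nonneg a b f prev pos e : 0 <= a <= 1 -> 0 <= b <= 1 ->
  0 <= step_prob a b f prev pos e.
Proof. intros Ha Hb. pose proof (akp_range a b f pos Ha Hb).
  unfold step_prob; destruct (Bool.eqb prev e); lra. Qed.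

Lemma step_sum a b f prev pos :
  step_prob a b f prev pos true + step_prob a b f prev pos false = 1.
Proof. unfold step_prob; destruct prev; simpl; ring. Qed.

Lemma wf_nonneg a b f prev pos es : 0 <= a <= 1 -> 0 <= b <= 1 ->
  0 <= weight_from a b f prev pos es.
Proof. intros Ha Hb. revert prev pos; induction es; intros; simpl; [lra|].
  apply Rmult_le_pos; [apply step_nonneg|]; auto. Qed.

Lemma Pk_nonneg a b f N side target k prev pos : 0 <= a <= 1 -> 0 <= b <= 1 ->
  0 <= Pk a b f N side target k prev pos.
Proof. intros. unfold Pk. apply sumR_nonneg. intro es. unfold term.
  destruct (_ && _); [apply wf_nonneg; auto | lra]. Qed.

Fixpoint psum (g : nat -> R) n := match n with O => 0 | S n => psum g n + g n end.

Lemma psum_shift g n : psum g (S n) = g O + psum (fun k => g (S k)) n.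
Proof. induction n; simpl in *; [ring|]. rewrite IHn; ring. Qed.

Lemma psum_ext g h n : (forall k, g k = h k) -> psum g n = psum h n.
Proof. intro H; induction n; simpl; auto. rewrite IHn, H; auto. Qed.

Lemma psum_plus g h n : psum (fun k => g k + h k) n = psum g n + psum h n.
Proof. induction n; simpl; [ring|]. rewrite IHn; ring. Qed.

Lemma psum_scal c g n : psum (fun k => c * g k) n = c * psum g n.
Proof. induction n; simpl; [ring|]. rewrite IHn; ring. Qed.

Lemma psum_ind c n : psum (ind c) n = match n with O => 0 | S _ => c end.
Proof. induction n; simpl; [ring|]. rewrite IHn. destruct n; simpl; ring. Qed.

Lemma bR_range x : 0 <= bR x <= 1.
Proof. destruct x; simpl; lra. Qed.

Lemma psum_Pk_bound a b f N side target n : 0 <= a <= 1 -> 0 <= b <= 1 ->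
  forall prev pos, psum (fun k => Pk a b f N side target k prev pos) n <= 1.
Proof.
  intros Ha Hb. induction n; intros prev pos; [simpl; lra|].
  rewrite psum_shift, Pk_0.
  rewrite (psum_ext _ _ n (fun k => Pk_S a b f N side target k prev pos)).
  rewrite psum_plus, !psum_scal.
  assert (HG : forall e y, 0 <= psum (fun k => Gk a b f N side target k e y) n <= 1).
  { intros e y. unfold Gk. rewrite psum_plus, psum_scal, psum_ind.
    assert (0 <= psum (fun k => Pk a b f N side target k e y) n).
    { clear IHn. induction n; simpl; [lra|]. pose proof (Pk_nonneg a b f N side target n e y Ha Hb). lra. }
    specialize (IHn e y).
    destruct (hits N target y), (side y); cbn [andb negb bR]; destruct n; lra. }
  pose proof (HG true (pos + inc true)%Z). pose proof (HG false (pos + inc false)%Z).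
  pose proof (step_nonneg a b f prev pos true Ha Hb).
  pose proof (step_nonneg a b f prev pos false Ha Hb).
  pose proof (step_sum a b f prev pos). nra.
Qed.

Lemma sum_n_psum g n : sum_n g n = psum g (S n).
Proof. induction n. - rewrite sum_O; simpl; rewrite Rplus_0_l; reflexivity. - rewrite sum_Sn, IHn. simpl. reflexivity. Qed.

Lemma Pk_ex a b f N side target prev pos : 0 <= a <= 1 -> 0 <= b <= 1 ->
  ex_series (fun k => Pk a b f N side target k prev pos).
Proof.
  intros Ha Hb.
  destruct (ex_finite_lim_seq_incr (sum_n (fun k => Pk a b f N side target k prev pos)) 1) as [l Hl].
  - intro n. rewrite sum_Sn. pose proof (Pk_nonneg a b f N side target (S n) prev pos Ha Hb).
    unfold plus; simpl. lra.
  - intro n. rewrite sum_n_psum. apply psum_Pk_bound; auto.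
  - exists l. exact Hl.
Qed.

Definition Sv a b f N side target prev pos := Series (fun k => Pk a b f N side target k prev pos).

Definition Nx a b f N side target e y :=
  bR (hits N target y && side y) + bR (side y && negb (hits N target y)) * Sv a b f N side target e y.

Lemma ind_series c : is_series (ind c) c.
Proof.
  change (is_lim_seq (sum_n (ind c)) (Finite c)).
  apply (is_lim_seq_ext (fun _ => c)); [|apply is_lim_seq_const].
  intro n. induction n. - rewrite sum_O; reflexivity.
  - rewrite sum_Sn, <- IHn. simpl. unfold plus; simpl. ring.
Qed.

Lemma Gk_series a b f N side target e y : 0 <= a <= 1 -> 0 <= b <= 1 ->
  is_series (fun k => Gk a b f N side target k e y) (Nx a b f N side target e y).
Proof.
  intros. unfold Gk, Nx. apply (is_series_plus (ind _) (fun k => _ * _)).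
  - apply ind_series.
  - apply (is_series_scal _ (fun k => Pk a b f N side target k e y)). apply Series_correct, Pk_ex; auto.
Qed.

Lemma Sv_eq a b f N side target prev pos : 0 <= a <= 1 -> 0 <= b <= 1 ->
  Sv a b f N side target prev pos =
  step_prob a b f prev pos true * Nx a b f N side target true (pos + inc true)%Z +
  step_prob a b f prev pos false * Nx a b f N side target false (pos + inc false)%Z.
Proof.
  intros Ha Hb. unfold Sv at 1. apply is_series_unique.
  pose proof (Gk_series a b f N side target true (pos + inc true)%Z Ha Hb) as H1.
  pose proof (Gk_series a b f N side target false (pos + inc false)%Z Ha Hb) as H2.
  pose proof (is_series_plus _ _ _ _ (is_series_scal (step_prob a b f prev pos true) _ _ H1)
     (is_series_scal (step_prob a b f prev pos false) _ _ H2)) as H.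
  apply is_series_decr_1. rewrite Pk_0.
  replace (plus _ (opp 0)) with
    (plus (scal (step_prob a b f prev pos true) (Nx a b f N side target true (pos + inc true)%Z))
          (scal (step_prob a b f prev pos false) (Nx a b f N side target false (pos + inc false)%Z))).
  2:{ unfold plus, opp, scal; simpl. unfold mult; simpl. ring. }
  eapply is_series_ext; [|exact H]. intro k. rewrite Pk_S. reflexivity.
Qed.

Lemma rho_series a b f N side x0 t : 0 <= a <= 1 -> 0 <= b <= 1 ->
  Series (event_prob a b f N side x0 t) =
  bR (side x0) * (/2 * Nx a b f N side t true (x0 + inc true)%Z +
                  /2 * Nx a b f N side t false (x0 + inc false)%Z).
Proof.
  intros Ha Hb. apply is_series_unique.
  pose proof (Gk_series a b f N side t true (x0 + inc true)%Z Ha Hb) as H1.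
  pose proof (Gk_series a b f N side t false (x0 + inc false)%Z Ha Hb) as H2.
  pose proof (is_series_scal (bR (side x0)) _ _ (is_series_plus _ _ _ _ (is_series_scal (/2) _ _ H1)
     (is_series_scal (/2) _ _ H2))) as H.
  apply is_series_decr_1. rewrite event_0.
  replace (plus _ (opp 0)) with (scal (bR (side x0))
    (plus (scal (/2) (Nx a b f N side t true (x0 + inc true)%Z))
          (scal (/2) (Nx a b f N side t false (x0 + inc false)%Z)))).
  2:{ unfold plus, opp, scal; simpl. unfold mult; simpl. ring. }
  eapply is_series_ext; [|exact H]. intro k. rewrite event_S. reflexivity.
Qed.

Lemma zind (P : Z -> Prop) lo : P lo -> (forall x, (lo <= x)%Z -> P x -> P (x + 1)%Z) ->
  forall x, (lo <= x)%Z -> P x.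
Proof.
  intros H0 HS x Hx. replace x with (lo + Z.of_nat (Z.to_nat (x - lo)))%Z by lia.
  induction (Z.to_nat (x - lo)) as [|n IH].
  - simpl. rewrite Z.add_0_r. exact H0.
  - rewrite Nat2Z.inj_succ, Z.add_succ_r, <- Z.add_1_r. apply HS; [lia|exact IH].
Qed.

Lemma alg (lo hi : Z) (al u v phi : Z -> R) :
  (lo <= hi)%Z -> (forall x, (lo <= x <= hi)%Z -> al x <> 0) ->
  u (hi + 1)%Z = 1 -> v (lo - 1)%Z = 0 ->
  (forall x, (lo <= x <= hi)%Z -> u x = al x * u (x + 1)%Z + (1 - al x) * v (x - 1)%Z) ->
  (forall x, (lo <= x <= hi)%Z -> v x = al x * v (x - 1)%Z + (1 - al x) * u (x + 1)%Z) ->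
  phi lo = 1 -> (forall x, (lo <= x <= hi)%Z -> phi (x + 1)%Z = phi x + (/ al x - 1)) ->
  u (lo + 1)%Z * al lo * phi (hi + 1)%Z = 1.
Proof.
  intros Hle Hal Hu Hv Eu Ev Hp0 Hp.
  set (C := u lo).
  assert (K1 : forall x, (lo <= x)%Z -> (x <= hi + 1)%Z -> u x - v (x - 1)%Z = C).
  { apply (zind (fun x => (x <= hi + 1)%Z -> u x - v (x - 1)%Z = C)).
    - intros _. rewrite Hv. unfold C; ring.
    - intros x Hx IH Hx1. specialize (IH ltac:(lia)).
      replace (x + 1 - 1)%Z with x by ring.
      rewrite <- IH. rewrite (Ev x) by lia. rewrite (Eu x) by lia. ring. }
  assert (K2 : forall x, (lo <= x)%Z -> (x <= hi + 1)%Z -> u x = C * phi x).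
  { apply (zind (fun x => (x <= hi + 1)%Z -> u x = C * phi x)).
    - intros _. rewrite Hp0. unfold C; ring.
    - intros x Hx IH Hx1. specialize (IH ltac:(lia)).
      pose proof (K1 x Hx ltac:(lia)) as A.
      pose proof (Eu x ltac:(lia)) as B.
      pose proof (Hal x ltac:(lia)) as Hn.
      rewrite Hp by lia.
      assert (D : u (x + 1)%Z - v (x - 1)%Z = C / al x).
      { assert (D0 : al x * (u (x + 1)%Z - v (x - 1)%Z) = C) by (rewrite <- A, B; ring).
        rewrite <- D0. field. exact Hn. }
      assert (E : u (x + 1)%Z = C / al x + u x - C) by lra.
      rewrite E, IH. field. exact Hn. }
  pose proof (K2 (hi + 1)%Z ltac:(lia) ltac:(lia)) as F1.
  pose proof (K2 (lo + 1)%Z ltac:(lia) ltac:(lia)) as F2.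
  rewrite Hp in F2 by lia. rewrite Hp0 in F2.
  pose proof (Hal lo ltac:(lia)).
  rewrite F2. rewrite Hu in F1. rewrite F1. field. auto.
Qed.

Lemma akp_nz a b f x : 0 < a < 1 -> 0 < b < 1 -> akp a b f x <> 0.
Proof. intros; unfold akp; destruct (_ <? _)%Z; lra. Qed.

Lemma step_tt a b f x : step_prob a b f true x true = akp a b f x.
Proof. reflexivity. Qed.
Lemma step_tf a b f x : step_prob a b f true x false = 1 - akp a b f x.
Proof. reflexivity. Qed.
Lemma step_ft a b f x : step_prob a b f false x true = 1 - akp a b f x.
Proof. reflexivity. Qed.
Lemma step_ff a b f x : step_prob a b f false x false = akp a b f x.
Proof. reflexivity. Qed.

Lemma up_gen a b f N m n (phi : Z -> R) : 0 < a < 1 -> 0 < b < 1 ->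
  (0 <= m)%Z -> (m < n)%Z -> (n < N)%Z -> phi m = 1 ->
  (forall x, (m <= x <= n - 1)%Z -> phi (x + 1)%Z = phi x + (/ akp a b f x - 1)) ->
  2 * rho a b f N m n * akp a b f m * phi n = 1.
Proof.
  intros Ha Hb Hm Hmn HnN Hp0 Hp.
  assert (Ha' : 0 <= a <= 1) by lra. assert (Hb' : 0 <= b <= 1) by lra.
  unfold rho. rewrite (proj2 (Z.ltb_lt m n)) by lia.
  set (side := fun z => (m <=? z)%Z).
  rewrite rho_series by auto.
  set (u := fun y => if (y =? n)%Z then 1 else Sv a b f N side n true y).
  set (v := fun y => if (y =? m - 1)%Z then 0 else Sv a b f N side n false y).
  assert (HNt : forall x, (m <= x <= n - 1)%Z -> Nx a b f N side n true (x + inc true)%Z = u (x + 1)%Z).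
  { intros x Hx. unfold Nx, u, hits, side. cbn [inc].
    rewrite (proj2 (Z.leb_le m (x + 1)%Z)) by lia.
    rewrite (proj2 (Z.eqb_neq (Z.abs (x + 1)) N)) by lia.
    destruct (x + 1 =? n)%Z; cbn [orb andb negb bR]; ring. }
  assert (HNf : forall x, (m <= x <= n - 1)%Z -> Nx a b f N side n false (x + inc false)%Z = v (x - 1)%Z).
  { intros x Hx. unfold Nx, v, hits, side. cbn [inc].
    replace (x + -1)%Z with (x - 1)%Z by ring.
    destruct (Z.eq_dec x m) as [->|Hxm].
    - rewrite Z.eqb_refl. rewrite (proj2 (Z.leb_gt m (m - 1)%Z)) by lia.
      rewrite !andb_false_r. cbn [bR andb]. ring.
    - rewrite (proj2 (Z.eqb_neq (x - 1) (m - 1))) by lia.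
      rewrite (proj2 (Z.leb_le m (x - 1)%Z)) by lia.
      rewrite (proj2 (Z.eqb_neq (Z.abs (x - 1)) N)) by lia.
      rewrite (proj2 (Z.eqb_neq (x - 1) n)) by lia.
      cbn [orb andb negb bR]. ring. }
  pose proof (alg m (n - 1) (akp a b f) u v phi ltac:(lia)
    ltac:(intros; apply akp_nz; auto)) as A.
  replace (n - 1 + 1)%Z with n in A by ring.
  assert (Un : u n = 1) by (unfold u; rewrite Z.eqb_refl; reflexivity).
  assert (Vm : v (m - 1)%Z = 0) by (unfold v; rewrite Z.eqb_refl; reflexivity).
  specialize (A Un Vm).
  assert (Eu : forall x, (m <= x <= n - 1)%Z ->
    u x = akp a b f x * u (x + 1)%Z + (1 - akp a b f x) * v (x - 1)%Z).
  { intros x Hx. rewrite <- HNt, <- HNf by auto. unfold u at 1.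
    rewrite (proj2 (Z.eqb_neq x n)) by lia. rewrite Sv_eq by auto.
    rewrite step_tt, step_tf. reflexivity. }
  assert (Ev : forall x, (m <= x <= n - 1)%Z ->
    v x = akp a b f x * v (x - 1)%Z + (1 - akp a b f x) * u (x + 1)%Z).
  { intros x Hx. rewrite <- HNt, <- HNf by auto. unfold v at 1.
    rewrite (proj2 (Z.eqb_neq x (m - 1))) by lia. rewrite Sv_eq by auto.
    rewrite step_ft, step_ff. ring. }
  specialize (A Eu Ev Hp0 Hp).
  replace (side m) with true by (unfold side; symmetry; apply Z.leb_le; lia).
  rewrite HNt, HNf by lia. rewrite Vm. cbn [bR].
  transitivity (u (m + 1)%Z * akp a b f m * phi n); [field | exact A].
Qed.

Lemma down_gen a b f N m n (psi : Z -> R) : 0 < a < 1 -> 0 < b < 1 ->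
  (0 <= m)%Z -> (m < n)%Z -> (n < N)%Z -> psi n = 1 ->
  (forall x, (m + 1 <= x <= n)%Z -> psi (x - 1)%Z = psi x + (/ akp a b f x - 1)) ->
  2 * rho a b f N n m * akp a b f n * psi m = 1.
Proof.
  intros Ha Hb Hm Hmn HnN Hp0 Hp.
  assert (Ha' : 0 <= a <= 1) by lra. assert (Hb' : 0 <= b <= 1) by lra.
  unfold rho. rewrite (proj2 (Z.ltb_ge n m)) by lia.
  set (side := fun z => (z <=? n)%Z).
  rewrite rho_series by auto.
  set (U := fun y => if (y =? n + 1)%Z then 0 else Sv a b f N side m true y).
  set (V := fun y => if (y =? m)%Z then 1 else Sv a b f N side m false y).
  assert (HNt : forall x, (m + 1 <= x <= n)%Z -> Nx a b f N side m true (x + inc true)%Z = U (x + 1)%Z).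
  { intros x Hx. unfold Nx, U, hits, side. cbn [inc].
    destruct (Z.eq_dec x n) as [->|Hxn].
    - rewrite Z.eqb_refl. rewrite (proj2 (Z.leb_gt (n + 1)%Z n)) by lia.
      rewrite !andb_false_r. cbn [bR andb]. ring.
    - rewrite (proj2 (Z.eqb_neq (x + 1) (n + 1))) by lia.
      rewrite (proj2 (Z.leb_le (x + 1)%Z n)) by lia.
      rewrite (proj2 (Z.eqb_neq (Z.abs (x + 1)) N)) by lia.
      rewrite (proj2 (Z.eqb_neq (x + 1) m)) by lia.
      cbn [orb andb negb bR]. ring. }
  assert (HNf : forall x, (m + 1 <= x <= n)%Z -> Nx a b f N side m false (x + inc false)%Z = V (x - 1)%Z).
  { intros x Hx. unfold Nx, V, hits, side. cbn [inc].
    replace (x + -1)%Z with (x - 1)%Z by ring.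
    rewrite (proj2 (Z.leb_le (x - 1)%Z n)) by lia.
    rewrite (proj2 (Z.eqb_neq (Z.abs (x - 1)) N)) by lia.
    destruct (x - 1 =? m)%Z; cbn [orb andb negb bR]; ring. }
  pose proof (alg (- n) (- m - 1) (fun y => akp a b f (- y)) (fun y => V (- y)%Z)
    (fun y => U (- y)%Z) (fun y => psi (- y)%Z) ltac:(lia)
    ltac:(intros; apply akp_nz; auto)) as A.
  cbv beta in A.
  replace (- (- m - 1 + 1))%Z with m in A by ring.
  replace (- (- n - 1))%Z with (n + 1)%Z in A by ring.
  replace (- (- n + 1))%Z with (n - 1)%Z in A by ring.
  replace (- - n)%Z with n in A by ring.
  assert (Vm : V m = 1) by (unfold V; rewrite Z.eqb_refl; reflexivity).
  assert (Un : U (n + 1)%Z = 0) by (unfold U; rewrite Z.eqb_refl; reflexivity).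
  specialize (A Vm Un).
  assert (Eu : forall y, (- n <= y <= - m - 1)%Z ->
    V (- y)%Z = akp a b f (- y) * V (- (y + 1))%Z + (1 - akp a b f (- y)) * U (- (y - 1))%Z).
  { intros y Hy. replace (- (y + 1))%Z with (- y - 1)%Z by ring.
    replace (- (y - 1))%Z with (- y + 1)%Z by ring.
    rewrite <- HNt, <- HNf by lia. unfold V at 1.
    rewrite (proj2 (Z.eqb_neq (- y) m)) by lia. rewrite Sv_eq by auto.
    rewrite step_ft, step_ff. ring. }
  assert (Ev : forall y, (- n <= y <= - m - 1)%Z ->
    U (- y)%Z = akp a b f (- y) * U (- (y - 1))%Z + (1 - akp a b f (- y)) * V (- (y + 1))%Z).
  { intros y Hy. replace (- (y + 1))%Z with (- y - 1)%Z by ring.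
    replace (- (y - 1))%Z with (- y + 1)%Z by ring.
    rewrite <- HNt, <- HNf by lia. unfold U at 1.
    rewrite (proj2 (Z.eqb_neq (- y) (n + 1))) by lia. rewrite Sv_eq by auto.
    rewrite step_tt, step_tf. ring. }
  specialize (A Eu Ev Hp0).
  assert (Hp' : forall y, (- n <= y <= - m - 1)%Z ->
    psi (- (y + 1))%Z = psi (- y)%Z + (/ akp a b f (- y) - 1)).
  { intros y Hy. replace (- (y + 1))%Z with (- y - 1)%Z by ring. apply Hp. lia. }
  specialize (A Hp').
  replace (side n) with true by (unfold side; symmetry; apply Z.leb_le; lia).
  rewrite HNt, HNf by lia. rewrite Un. cbn [bR].
  transitivity (V (n - 1)%Z * akp a b f n * psi m); [field | exact A].
Qed.

Lemma akp_lt a b f x : (0 <= x < f)%Z -> akp a b f x = a.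
Proof. intros. unfold akp. rewrite Z.abs_eq by lia. rewrite (proj2 (Z.ltb_lt x f)) by lia. reflexivity. Qed.

Lemma akp_ge a b f x : (0 <= f <= x)%Z -> akp a b f x = b.
Proof. intros. unfold akp. rewrite Z.abs_eq by lia. rewrite (proj2 (Z.ltb_ge x f)) by lia. reflexivity. Qed.

Lemma fin r c P T : 2 * r * c * P = 1 -> T * (2 * c * P) = 1 -> r = T.
Proof.
  intros H1 H2. transitivity (r * (T * (2 * c * P))); [rewrite H2; ring|].
  transitivity (T * (2 * r * c * P)); [ring|]. rewrite H1; ring.
Qed.

Ltac zr := repeat (rewrite ?plus_IZR, ?minus_IZR, ?opp_IZR).

Theorem proposition1 (a b : R) (f N : Z) :
  0 < a < 1 -> 0 < b < 1 -> (1 <= f)%Z -> (f < N)%Z ->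
  (* (I.1) *)
  (forall l j : Z, (1 <= l)%Z -> (0 <= j)%Z -> (0 <= f - l)%Z -> (f + j < N)%Z ->
     rho a b f N (f - l) (f + j)
     = (b / (2 * a)) / (IZR j + IZR l * (b / a) - IZR (l + j - 1) * b)) /\
  (* (I.2) *)
  (forall l j : Z, (1 <= l)%Z -> (0 <= j)%Z -> (0 <= f - l)%Z -> (f + j < N)%Z ->
     rho a b f N (f + j) (f - l)
     = (1 / 2) / (IZR (j + 1) + IZR (l - 1) * (b / a) - IZR (l + j - 1) * b)) /\
  (* (II.1) *)
  (forall m l : Z, (0 <= m)%Z -> (1 <= l)%Z -> (m + l <= f - 1)%Z ->
     rho a b f N m (m + l) = 1 / (2 * (IZR l - IZR (l - 1) * a)) /\
     rho a b f N (m + l) m = 1 / (2 * (IZR l - IZR (l - 1) * a))) /\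
  (* (II.2) *)
  (forall m j : Z, (f <= m)%Z -> (1 <= j)%Z -> (m + j < N)%Z ->
     rho a b f N m (m + j) = 1 / (2 * (IZR j - IZR (j - 1) * b)) /\
     rho a b f N (m + j) m = 1 / (2 * (IZR j - IZR (j - 1) * b))).
Proof.
  intros Ha Hb Hf HfN.
  assert (Ha0 : a <> 0) by lra. assert (Hb0 : b <> 0) by lra.
  split; [|split; [|split]].
  - intros l j Hl Hj Hfl Hfj.
    pose proof (up_gen a b f N (f - l) (f + j)
      (fun x => 1 + IZR (Z.min x f - (f - l)) * (/ a - 1) + IZR (Z.max x f - f) * (/ b - 1))
      Ha Hb ltac:(lia) ltac:(lia) ltac:(lia)) as H.
    cbv beta in H.
    rewrite (Z.min_l (f - l) f), (Z.max_r (f - l) f), (Z.min_r (f + j) f), (Z.max_l (f + j) f),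
      (akp_lt a b f (f - l)) in H by lia.
    replace (f - l - (f - l))%Z with 0%Z in H by ring.
    replace (f - f)%Z with 0%Z in H by ring.
    replace (f + j - f)%Z with j in H by ring.
    replace (f - (f - l))%Z with l in H by ring.
    specialize (H ltac:(simpl; ring)).
    assert (Hs : forall x, (f - l <= x <= f + j - 1)%Z ->
      1 + IZR (Z.min (x + 1) f - (f - l)) * (/ a - 1) + IZR (Z.max (x + 1) f - f) * (/ b - 1) =
      1 + IZR (Z.min x f - (f - l)) * (/ a - 1) + IZR (Z.max x f - f) * (/ b - 1) + (/ akp a b f x - 1)).
    { intros x Hx. destruct (Z.lt_ge_cases x f).
      - rewrite akp_lt by lia.
        rewrite (Z.min_l (x + 1) f), (Z.min_l x f), (Z.max_r (x + 1) f), (Z.max_r x f) by lia.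
        zr. ring.
      - rewrite akp_ge by lia.
        rewrite (Z.min_r (x + 1) f), (Z.min_r x f), (Z.max_l (x + 1) f), (Z.max_l x f) by lia.
        zr. ring. }
    specialize (H Hs).
    set (P := 1 + IZR l * (/ a - 1) + IZR j * (/ b - 1)) in H.
    assert (P <> 0) by (intro E; rewrite E in H; lra).
    apply (fin _ a P). { exact H. }
    replace (IZR j + IZR l * (b / a) - IZR (l + j - 1) * b) with (b * P)
      by (unfold P; zr; field; auto).
    field. auto.
  - intros l j Hl Hj Hfl Hfj.
    pose proof (down_gen a b f N (f - l) (f + j)
      (fun x => 1 + IZR (f + j - Z.max x (f - 1)) * (/ b - 1) + IZR (f - 1 - Z.min x (f - 1)) * (/ a - 1))
      Ha Hb ltac:(lia) ltac:(lia) ltac:(lia)) as H.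
    cbv beta in H.
    rewrite (Z.max_l (f + j) (f - 1)), (Z.min_r (f + j) (f - 1)), (Z.max_r (f - l) (f - 1)),
      (Z.min_l (f - l) (f - 1)), (akp_ge a b f (f + j)) in H by lia.
    replace (f + j - (f + j))%Z with 0%Z in H by ring.
    replace (f - 1 - (f - 1))%Z with 0%Z in H by ring.
    replace (f + j - (f - 1))%Z with (j + 1)%Z in H by ring.
    replace (f - 1 - (f - l))%Z with (l - 1)%Z in H by ring.
    specialize (H ltac:(simpl; ring)).
    assert (Hs : forall x, (f - l + 1 <= x <= f + j)%Z ->
      1 + IZR (f + j - Z.max (x - 1) (f - 1)) * (/ b - 1) + IZR (f - 1 - Z.min (x - 1) (f - 1)) * (/ a - 1) =
      1 + IZR (f + j - Z.max x (f - 1)) * (/ b - 1) + IZR (f - 1 - Z.min x (f - 1)) * (/ a - 1) + (/ akp a b f x - 1)).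
    { intros x Hx. destruct (Z.lt_ge_cases x f).
      - rewrite akp_lt by lia.
        rewrite (Z.max_r (x - 1) (f - 1)), (Z.max_r x (f - 1)), (Z.min_l (x - 1) (f - 1)), (Z.min_l x (f - 1)) by lia.
        zr. ring.
      - rewrite akp_ge by lia.
        rewrite (Z.max_l (x - 1) (f - 1)), (Z.max_l x (f - 1)), (Z.min_r (x - 1) (f - 1)), (Z.min_r x (f - 1)) by lia.
        zr. ring. }
    specialize (H Hs).
    set (P := 1 + IZR (j + 1) * (/ b - 1) + IZR (l - 1) * (/ a - 1)) in H.
    assert (P <> 0) by (intro E; rewrite E in H; lra).
    apply (fin _ b P). { exact H. }
    replace (IZR (j + 1) + IZR (l - 1) * (b / a) - IZR (l + j - 1) * b) with (b * P)
      by (unfold P; zr; field; auto).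
    field. auto.
  - intros m l Hm Hl Hml. split.
    + pose proof (up_gen a b f N m (m + l) (fun x => 1 + IZR (x - m) * (/ a - 1))
        Ha Hb ltac:(lia) ltac:(lia) ltac:(lia)) as H.
      cbv beta in H. rewrite (akp_lt a b f m) in H by lia.
      replace (m - m)%Z with 0%Z in H by ring. replace (m + l - m)%Z with l in H by ring.
      specialize (H ltac:(simpl; ring)).
      specialize (H ltac:(intros x Hx; rewrite akp_lt by lia; zr; ring)).
      set (P := 1 + IZR l * (/ a - 1)) in H.
      assert (P <> 0) by (intro E; rewrite E in H; lra).
      apply (fin _ a P). { exact H. }
      replace (IZR l - IZR (l - 1) * a) with (a * P) by (unfold P; zr; field; auto).
      field. auto.
    + pose proof (down_gen a b f N m (m + l) (fun x => 1 + IZR (m + l - x) * (/ a - 1))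
        Ha Hb ltac:(lia) ltac:(lia) ltac:(lia)) as H.
      cbv beta in H. rewrite (akp_lt a b f (m + l)) in H by lia.
      replace (m + l - (m + l))%Z with 0%Z in H by ring. replace (m + l - m)%Z with l in H by ring.
      specialize (H ltac:(simpl; ring)).
      specialize (H ltac:(intros x Hx; rewrite akp_lt by lia; zr; ring)).
      set (P := 1 + IZR l * (/ a - 1)) in H.
      assert (P <> 0) by (intro E; rewrite E in H; lra).
      apply (fin _ a P). { exact H. }
      replace (IZR l - IZR (l - 1) * a) with (a * P) by (unfold P; zr; field; auto).
      field. auto.
  - intros m j Hm Hj Hmj. split.
    + pose proof (up_gen a b f N m (m + j) (fun x => 1 + IZR (x - m) * (/ b - 1))
        Ha Hb ltac:(lia) ltac:(lia) ltac:(lia)) as H.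
      cbv beta in H. rewrite (akp_ge a b f m) in H by lia.
      replace (m - m)%Z with 0%Z in H by ring. replace (m + j - m)%Z with j in H by ring.
      specialize (H ltac:(simpl; ring)).
      specialize (H ltac:(intros x Hx; rewrite akp_ge by lia; zr; ring)).
      set (P := 1 + IZR j * (/ b - 1)) in H.
      assert (P <> 0) by (intro E; rewrite E in H; lra).
      apply (fin _ b P). { exact H. }
      replace (IZR j - IZR (j - 1) * b) with (b * P) by (unfold P; zr; field; auto).
      field. auto.
    + pose proof (down_gen a b f N m (m + j) (fun x => 1 + IZR (m + j - x) * (/ b - 1))
        Ha Hb ltac:(lia) ltac:(lia) ltac:(lia)) as H.
      cbv beta in H. rewrite (akp_ge a b f (m + j)) in H by lia.
      replace (m + j - (m + j))%Z with 0%Z in H by ring. replace (m + j - m)%Z with j in H by ring.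
      specialize (H ltac:(simpl; ring)).
      specialize (H ltac:(intros x Hx; rewrite akp_ge by lia; zr; ring)).
      set (P := 1 + IZR j * (/ b - 1)) in H.
      assert (P <> 0) by (intro E; rewrite E in H; lra).
      apply (fin _ b P). { exact H. }
      replace (IZR j - IZR (j - 1) * b) with (b * P) by (unfold P; zr; field; auto).
      field. auto.
Qed.
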